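(* Let $\mathcal{X}$ be a nonempty open convex subset of $\mathbb{R}^n$ and let $\textbf{F}:\mathcal{X}\to I(\mathbb{R})$ be $gH$-differentiable on $\mathcal{X}$. If $\textbf{F}$ is convex on $\mathcal{X}$, then \[\textbf{0}\preceq(x-y)^T\odot\nabla\textbf{F}(x)\ominus_{gH}(x-y)^T\odot\nabla\textbf{F}(y)\quad\text{for all }x,y\in\mathcal{X}.\]
   Context: $I(\mathbb{R})$: closed bounded intervals $\textbf{A}=[\underline{a},\overline{a}]$ with Moore arithmetic ($\oplus$ endpointwise; $\lambda\odot\textbf{A}=[\lambda\underline{a},\lambda\overline{a}]$ if $\lambda\ge0$, $[\lambda\overline{a},\lambda\underline{a}]$ if $\lambda<0$); $gH$-difference $\textbf{A}\ominus_{gH}\textbf{B}=[\min\{\underline{a}-\underline{b},\overline{a}-\overline{b}\},\max\{\underline{a}-\underline{b},\overline{a}-\overline{b}\}]$; limits in the norm $\max\{|\underline{a}|,|\overline{a}|\}$; $\textbf{0}=[0,0]$. $\textbf{A}\preceq\textbf{B}$ iff $\underline{a}\le\underline{b}$ and $\overline{a}\le\overline{b}$. An IVF is $\textbf{F}(x)=[\underline{f}(x),\overline{f}(x)]$. $D_i\textbf{F}(x)=\lim_{h\to0}\frac1h\odot(\textbf{F}(x+he_i)\ominus_{gH}\textbf{F}(x))$, $\nabla\textbf{F}(x)=(D_1\textbf{F}(x),\dots,D_n\textbf{F}(x))^T$, $d^T\odot\nabla\textbf{F}(x)=\bigoplus_i d_i\odot D_i\textbf{F}(x)$. Linear IVF: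 $\textbf{L}(x)=\bigoplus_i x_i\odot\textbf{L}(e_i)$. $\textbf{F}$ is $gH$-differentiable at $\bar{x}$ if there exist a linear IVF $\textbf{L}_{\bar{x}}$, an IVF $\textbf{E}(\textbf{F}(\bar{x});d)$ and $\delta>0$ with $(\textbf{F}(\bar{x}+d)\ominus_{gH}\textbf{F}(\bar{x}))\ominus_{gH}\textbf{L}_{\bar{x}}(d)=\lVert d\rVert\odot\textbf{E}(\textbf{F}(\bar{x});d)$ for $\lVert d\rVert<\delta$ and $\textbf{E}\to\textbf{0}$ as $\lVert d\rVert\to0$; on $\mathcal{X}$ means at every point. $\textbf{F}$ is convex if $\textbf{F}(\lambda x_1+(1-\lambda)x_2)\preceq\lambda\odot\textbf{F}(x_1)\oplus(1-\lambda)\odot\textbf{F}(x_2)$ for all $x_1,x_2\in\mathcal{X}$, $\lambda\in[0,1]$. *)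

(* Defs.v *)
From HB Require Import structures.
From mathcomp Require Import all_boot all_order all_algebra.
From mathcomp Require Import boolp classical_sets reals.
Set Implicit Arguments. Unset Strict Implicit. Unset Printing Implicit Defensive.
Import Order.TTheory GRing.Theory Num.Theory.
Local Open Scope ring_scope.

Section IntervalDefs.
Variable R : realType.

(* A closed bounded interval [lo, hi] is represented by the pair (lo, hi);
   validity lo <= hi is imposed as a hypothesis on the IVF. *)
Definition itv := (R * R)%type.
Definition ivalid (A : itv) : Prop := A.1 <= A.2.
Definition izero : itv := (0, 0).
Definition iadd (A B : itv) : itv := (A.1 + B.1, A.2 + B.2).
Definition iscale (l : R) (A : itv) : itv :=
  if 0 <= l then (l * A.1, l * A.2) else (l * A.2, l * A.1).
Definition igh (A B : itv) : itv :=
  (Num.min (A.1 - B.1) (A.2 - B.2), Num.max (A.1 - B.1) (A.2 - B.2)).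
Definition inorm (A : itv) : R := Num.max `|A.1| `|A.2|.
Definition ile (A B : itv) : Prop := A.1 <= B.1 /\ A.2 <= B.2.

Variable n : nat.

Definition vnorm (d : 'rV[R]_n) : R := \big[Num.max/0]_(j < n) `|d ord0 j|.
Definition evec (i : 'I_n) : 'rV[R]_n := delta_mx ord0 i.

(* d^T (.) G  =  (+)_i d_i (.) G_i  ; also the linear IVF with L(e_i) = G i *)
Definition ilinc (d : 'rV[R]_n) (G : 'I_n -> itv) : itv :=
  \big[iadd/izero]_(i < n) iscale (d ord0 i) (G i).

Variable X : 'rV[R]_n -> Prop.
Variable F : 'rV[R]_n -> itv.

Definition open_set : Prop :=
  forall x, X x -> exists r, 0 < r /\ forall y, vnorm (y - x) < r -> X y.
Definition convex_set : Prop :=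
  forall x1 x2 (l : R), X x1 -> X x2 -> 0 <= l <= 1 ->
    X (l *: x1 + (1 - l) *: x2).

Definition is_Dpartial (x : 'rV[R]_n) (i : 'I_n) (D : itv) : Prop :=
  forall eps, 0 < eps -> exists delta, 0 < delta /\
    forall h : R, h != 0 -> `|h| < delta -> X (x + h *: evec i) ->
      inorm (igh (iscale h^-1 (igh (F (x + h *: evec i)) (F x))) D) < eps.

Definition Dpartial (x : 'rV[R]_n) (i : 'I_n) : itv :=
  xget izero (fun D => is_Dpartial x i D).

Definition grad (x : 'rV[R]_n) : 'I_n -> itv := fun i => Dpartial x i.

Definition gH_differentiable_at (xb : 'rV[R]_n) : Prop :=
  exists (c : 'I_n -> itv) (E : 'rV[R]_n -> itv) (delta : R),
    0 < delta /\
    (forall d, vnorm d < delta -> X (xb + d) ->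
       igh (igh (F (xb + d)) (F xb)) (ilinc d c) = iscale (vnorm d) (E d)) /\
    (forall eps, 0 < eps -> exists r, 0 < r /\
       forall d, vnorm d < r -> inorm (E d) < eps).

Definition gH_differentiable_on : Prop :=
  forall x, X x -> gH_differentiable_at x.

Definition ivf_convex : Prop :=
  forall x1 x2 (l : R), X x1 -> X x2 -> 0 <= l <= 1 ->
    ile (F (l *: x1 + (1 - l) *: x2))
        (iadd (iscale l (F x1)) (iscale (1 - l) (F x2))).

End IntervalDefs.

(* Main.v *)
Require Import Defs.
From HB Require Import structures.
From mathcomp Require Import all_boot all_order all_algebra.
From mathcomp Require Import boolp classical_sets reals.
From mathcomp Require Import ring lra.
Import Order.TTheory GRing.Theory Num.Theory.
Local Open Scope ring_scope.
Set Implicit Arguments. Unset Strict Implicit.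

Section H.
Variable R : realType.
Implicit Types (A B P : itv R) (a b : R).

Lemma mm_cases a b : (Num.min a b = a /\ Num.max a b = b /\ a <= b) \/
   (Num.min a b = b /\ Num.max a b = a /\ b <= a).
Proof.
rewrite minEle maxEle; case: (leP a b) => h; [left|right]; split => //; lra.
Qed.

Lemma inorm_igh A B : inorm (igh A B) = Num.max `|A.1 - B.1| `|A.2 - B.2|.
Proof.
rewrite /inorm /igh /=.
by case: (mm_cases (A.1 - B.1) (A.2 - B.2)) => [[-> [-> _]]|[-> [-> _]]] //; rewrite maxC.
Qed.

Lemma iscale1 a P : (iscale a P).1 = if 0 <= a then a * P.1 else a * P.2.
Proof. by rewrite /iscale; case: ifP. Qed.
Lemma iscale2 a P : (iscale a P).2 = if 0 <= a then a * P.2 else a * P.1.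
Proof. by rewrite /iscale; case: ifP. Qed.

Lemma iscale_mul a b P : iscale (a * b) P = iscale a (iscale b P).
Proof.
rewrite /iscale.
case: (leP 0 a) => ha; case: (leP 0 b) => hb; case: (leP 0 (a*b)) => hab /=;
 rewrite ?mulrA //; try (exfalso; nra).
- have -> : a = 0 by nra. by rewrite !mul0r.
- have -> : b = 0 by nra. by rewrite !mulr0 !mul0r.
Qed.

Lemma inorm_iscale_le a P : inorm (iscale a P) <= `|a| * inorm P.
Proof.
rewrite /inorm /iscale; case: ifP => _ /=; rewrite !normrM ge_max !ler_wpM2l ?normr_ge0 //;
  rewrite ?le_max ?lexx ?orbT //.
Qed.

Variable n : nat.
Implicit Types (v d : 'rV[R]_n).

Lemma bigmax_ge (f : 'I_n -> R) j : f j <= \big[Num.max/0]_(i < n) f i.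
Proof.
have : j \in index_enum 'I_n by rewrite mem_index_enum.
elim: (index_enum 'I_n) => //= a s IH; rewrite big_cons in_cons.
case/orP => [/eqP->|/IH h]; by rewrite le_max ?lexx // h orbT.
Qed.

Lemma bigmax_le (f : 'I_n -> R) c : 0 <= c -> (forall j, f j <= c) ->
  \big[Num.max/0]_(i < n) f i <= c.
Proof.
move=> c0 h; elim: (index_enum 'I_n) => [|a s IH]; rewrite ?big_nil ?big_cons //.
by rewrite ge_max h IH.
Qed.


Lemma vnorm_ub v j : `|v ord0 j| <= vnorm v.
Proof. exact: bigmax_ge. Qed.

Lemma vnorm_ge0 v : 0 <= vnorm v.
Proof.
rewrite /vnorm; elim: (index_enum 'I_n) => [|a s IH]; rewrite ?big_nil ?big_cons //.
by rewrite le_max IH orbT.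
Qed.

Lemma vnorm_scale a v : vnorm (a *: v) <= `|a| * vnorm v.
Proof.
apply: bigmax_le; first by rewrite mulr_ge0 ?vnorm_ge0.
by move=> j; rewrite mxE normrM ler_wpM2l ?vnorm_ub.
Qed.

Lemma vnorm_evec (i : 'I_n) : vnorm (evec R i) <= 1.
Proof.
apply: bigmax_le => // j; rewrite /evec mxE; case: (_ && _) => /=; by rewrite ?normr1 ?normr0.
Qed.

Lemma ilinc1 d c : (ilinc d c).1 = \sum_(j < n) (iscale (d ord0 j) (c j)).1.
Proof. by rewrite /ilinc (@big_morph _ _ fst 0 +%R (izero R) (@iadd R)). Qed.
Lemma ilinc2 d c : (ilinc d c).2 = \sum_(j < n) (iscale (d ord0 j) (c j)).2.
Proof. by rewrite /ilinc (@big_morph _ _ snd 0 +%R (izero R) (@iadd R)). Qed.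

Lemma ilincZ1 a d c : (ilinc (a *: d) c).1 =
  if 0 <= a then a * (ilinc d c).1 else a * (ilinc d c).2.
Proof.
rewrite ilinc1 ilinc2 ilinc1; under eq_bigr do rewrite mxE iscale_mul iscale1.
by case: ifP => _; rewrite mulr_sumr.
Qed.
Lemma ilincZ2 a d c : (ilinc (a *: d) c).2 =
  if 0 <= a then a * (ilinc d c).2 else a * (ilinc d c).1.
Proof.
rewrite ilinc1 ilinc2 ilinc2; under eq_bigr do rewrite mxE iscale_mul iscale2.
by case: ifP => _; rewrite mulr_sumr.
Qed.


Lemma ilinc_evec c (i : 'I_n) : ilinc (evec R i) c = c i.
Proof.
have E k : (evec R i) ord0 k = (i == k)%:R.
  by rewrite /evec mxE eqxx eq_sym.
rewrite [ilinc (evec R i) c]surjective_pairing ilinc1 ilinc2 (bigD1 i) //= [X in _ + X]big1 ?addr0 1?(bigD1 i) //= 1?[X in _ + X]big1 ?addr0.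
- by rewrite !E eqxx /iscale ler01 /= !mul1r -surjective_pairing.
- by move=> j /negbTE ij; rewrite E eq_sym ij /iscale lexx !mul0r.
- by move=> j /negbTE ij; rewrite E eq_sym ij /iscale lexx !mul0r.
Qed.

Lemma key_div (h g c e : R) : h != 0 -> `|g - h * c| < `|h| * e -> `|h^-1 * g - c| < e.
Proof.
move=> hnz; rewrite -{1}(mulVKf hnz g) -mulrBr normrM ltr_pM2l //.
by rewrite normr_gt0.
Qed.

End H.

Section I.
Variables (R : realType) (n : nat) (X : 'rV[R]_n -> Prop) (F : 'rV[R]_n -> itv R).

Lemma inorm_ge0 (A : itv R) : 0 <= inorm A.
Proof. by rewrite /inorm le_max normr_ge0. Qed.

Lemma near_pt x (i : 'I_n) h : vnorm (x + h *: evec R i - x) <= `|h|.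
Proof.
rewrite addrC addKr.
apply: le_trans (vnorm_scale _ _) _.
by rewrite -[X in _ <= X]mulr1 ler_wpM2l ?vnorm_evec.
Qed.

Lemma is_D_of_diff x (c : 'I_n -> itv R) (E : 'rV[R]_n -> itv R) (del : R) :
  0 < del ->
  (forall d, vnorm d < del -> X (x + d) ->
       igh (igh (F (x + d)) (F x)) (ilinc d c) = iscale (vnorm d) (E d)) ->
  (forall eps, 0 < eps -> exists r, 0 < r /\
       forall d, vnorm d < r -> inorm (E d) < eps) ->
  forall i, is_Dpartial X F x i (c i).
Proof.
move=> del0 hd hE i eps e0.
have [r [r0 hr]] := hE eps e0.
exists (Num.min del r); split; first by rewrite lt_min del0.
move=> h hnz hlt Xh.
have hv : vnorm (h *: evec R i) <= `|h|.
  by have := near_pt x i h; rewrite [x + _]addrC addrK.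
move: hlt; rewrite lt_min => /andP [h1 h2].
have Heq := hd (h *: evec R i) (le_lt_trans hv h1) Xh.
have hb : inorm (igh (igh (F (x + h *: evec R i)) (F x)) (ilinc (h *: evec R i) c)) < `|h| * eps.
  rewrite Heq; apply: le_lt_trans (inorm_iscale_le _ _) _.
  rewrite ger0_norm ?vnorm_ge0 //.
  apply: le_lt_trans (_ : `|h| * inorm (E (h *: evec R i)) < _).
    by rewrite ler_wpM2r ?inorm_ge0.
  by rewrite ltr_pM2l ?normr_gt0 // hr // (le_lt_trans hv h2).
move: hb; rewrite !inorm_igh !gt_max => /andP [b1 b2].
move: b1 b2; rewrite ilincZ1 ilincZ2 ilinc_evec.
set G := igh _ _.
rewrite iscale1 iscale2 invr_ge0.
case: ifP => _ b1 b2; apply/andP; split; exact: key_div.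
Qed.

Lemma D_unique x (i : 'I_n) D1 D2 : open_set X -> X x ->
  is_Dpartial X F x i D1 -> is_Dpartial X F x i D2 -> D1 = D2.
Proof.
move=> hop Xx h1 h2.
have [r [r0 hr]] := hop x Xx.
suff H : forall e, 0 < e -> `|D1.1 - D2.1| <= e /\ `|D1.2 - D2.2| <= e.
  have k1 : `|D1.1 - D2.1| <= 0.
    apply/ler_addgt0Pr => e e0; rewrite add0r; exact: (H e e0).1.
  have k2 : `|D1.2 - D2.2| <= 0.
    apply/ler_addgt0Pr => e e0; rewrite add0r; exact: (H e e0).2.
  move: k1 k2; rewrite !normr_le0 !subr_eq0 => /eqP e1 /eqP e2.
  by rewrite [D1]surjective_pairing [D2]surjective_pairing e1 e2.
move=> e e0.
have e20 : 0 < e / 2 by rewrite divr_gt0.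
have [d1 [d10 k1]] := h1 _ e20.
have [d2 [d20 k2]] := h2 _ e20.
set h := Num.min (Num.min d1 d2) r / 2.
have m0 : 0 < Num.min (Num.min d1 d2) r by rewrite !lt_min d10 d20 r0.
have h0 : 0 < h by rewrite divr_gt0.
have hlt : h < Num.min (Num.min d1 d2) r by rewrite /h ltr_pdivrMr //; lra.
move: hlt; rewrite !lt_min => /andP [/andP [hd1 hd2] hr'].
have hnz : h != 0 by rewrite gt_eqF.
have Xh : X (x + h *: evec R i).
  apply: hr; apply: le_lt_trans (near_pt x i h) _; by rewrite gtr0_norm.
have g1 : `|h| < d1 by rewrite gtr0_norm.
have g2 : `|h| < d2 by rewrite gtr0_norm.
have := k1 h hnz g1 Xh.
have := k2 h hnz g2 Xh.
rewrite !inorm_igh !gt_max !ltr_norml.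
move=> /andP [/andP [a1 a2] /andP [a3 a4]] /andP [/andP [b1 b2] /andP [b3 b4]].
rewrite !ler_norml; split; apply/andP; split; lra.
Qed.

Lemma grad_eq x (c : 'I_n -> itv R) (E : 'rV[R]_n -> itv R) (del : R) :
  open_set X -> X x -> 0 < del ->
  (forall d, vnorm d < del -> X (x + d) ->
       igh (igh (F (x + d)) (F x)) (ilinc d c) = iscale (vnorm d) (E d)) ->
  (forall eps, 0 < eps -> exists r, 0 < r /\
       forall d, vnorm d < r -> inorm (E d) < eps) ->
  grad X F x = c.
Proof.
move=> hop Xx del0 hd hE; apply: funext => i.
have hc := is_D_of_diff del0 hd hE i.
apply: (D_unique hop Xx _ hc).
by apply: xgetPex; exists (c i).
Qed.

End I.

Theorem theorem3p4 (R : realType) (n : nat)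
  (X : 'rV[R]_n -> Prop) (F : 'rV[R]_n -> itv R)
  (hne : exists x, X x) (hopen : open_set X) (hconv : convex_set X)
  (hvalid : forall x, X x -> ivalid (F x))
  (hdiff : gH_differentiable_on X F)
  (hF : ivf_convex X F) :
  forall x y, X x -> X y ->
    ile (izero R)
      (igh (ilinc (x - y) (grad X F x)) (ilinc (x - y) (grad X F y))).
Proof.
move=> x y Xx Xy.
have [cx [Ex [dx [dx0 [Hx HEx]]]]] := hdiff x Xx.
have [cy [Ey [dy [dy0 [Hy HEy]]]]] := hdiff y Xy.
rewrite (grad_eq hopen Xx dx0 Hx HEx) (grad_eq hopen Xy dy0 Hy HEy).
set d := x - y.
set A := ilinc d cx. set B := ilinc d cy.
suff [h1 h2] : B.1 <= A.1 /\ B.2 <= A.2.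
  rewrite /ile /igh /izero /=.
  case: (mm_cases (A.1 - B.1) (A.2 - B.2)) => [[-> [-> _]]|[-> [-> _]]]; split; lra.
set K := vnorm d.
have K0 : 0 <= K by apply: vnorm_ge0.
have key : forall eps, 0 < eps -> B.1 <= A.1 + 2 * K * eps /\ B.2 <= A.2 + 2 * K * eps.
  move=> eps e0.
  have [rx [rx0 hrx]] := HEx eps e0.
  have [ry [ry0 hry]] := HEy eps e0.
  set m := Num.min (Num.min dx rx) (Num.min dy ry).
  have m0 : 0 < m by rewrite !lt_min dx0 rx0 dy0 ry0.
  set s := m / (K + m).
  have Km0 : 0 < K + m by lra.
  have s0 : 0 < s by rewrite divr_gt0.
  have s1 : s <= 1 by rewrite ler_pdivrMr //; lra.
  have sK : s * K < m by rewrite mulrAC ltr_pdivrMr //; nra.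
  have hv1 : vnorm (s *: d) <= s * K.
    by apply: le_trans (vnorm_scale _ _) _; rewrite gtr0_norm.
  have hv2 : vnorm ((- s) *: d) <= s * K.
    by apply: le_trans (vnorm_scale _ _) _; rewrite normrN gtr0_norm.
  move: (le_lt_trans hv1 sK) (le_lt_trans hv2 sK); rewrite !lt_min.
  move=> /andP [/andP [_ _] /andP [v1 v2]] /andP [/andP [v3 v4] _].
  have s01 : 0 <= s <= 1 by rewrite s1 ltW.
  have Xz := hconv x y s Xx Xy s01.
  have Xw := hconv y x s Xy Xx s01.
  have ez : y + s *: d = s *: x + (1 - s) *: y.
    by rewrite /d scalerBr scalerBl scale1r addrCA.
  have ew : x + (- s) *: d = s *: y + (1 - s) *: x.
    by rewrite /d scaleNr scalerBr opprB scalerBl scale1r addrCA.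
  have Hy' := Hy (s *: d) v1; rewrite ez in Hy'; have {}Hy' := Hy' Xz.
  have Hx' := Hx ((- s) *: d) v3; rewrite ew in Hx'; have {}Hx' := Hx' Xw.
  have By : inorm (igh (igh (F (s *: x + (1 - s) *: y)) (F y)) (ilinc (s *: d) cy)) <= s * K * eps.
    rewrite Hy'; apply: le_trans (inorm_iscale_le _ _) _.
    rewrite ger0_norm ?vnorm_ge0 //; apply: ler_pM => //; rewrite ?vnorm_ge0 ?inorm_ge0 //.
    by apply: ltW; apply: hry.
  have Bx : inorm (igh (igh (F (s *: y + (1 - s) *: x)) (F x)) (ilinc ((- s) *: d) cx)) <= s * K * eps.
    rewrite Hx'; apply: le_trans (inorm_iscale_le _ _) _.
    rewrite ger0_norm ?vnorm_ge0 //; apply: ler_pM => //; rewrite ?vnorm_ge0 ?inorm_ge0 //.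
    by apply: ltW; apply: hrx.
  move: By Bx; rewrite !inorm_igh !ge_max !ilincZ1 !ilincZ2 /igh /=.
  rewrite (ltW s0) oppr_ge0 (lt_geF s0) /= -/A -/B.
  rewrite !ler_norml.
  move=> /andP [/andP [b1 b2] /andP [b3 b4]] /andP [/andP [a1 a2] /andP [a3 a4]].
  have [c1 c2] := hF x y s Xx Xy s01.
  have [c3 c4] := hF y x s Xy Xx s01.
  move: c1 c2 c3 c4; rewrite /iadd /= !iscale1 !iscale2 (ltW s0) subr_ge0 s1 /=.
  move=> c1 c2 c3 c4.
  set al := (F (s *: x + (1 - s) *: y)).1 - (F y).1.
  set be := (F (s *: x + (1 - s) *: y)).2 - (F y).2.
  set al' := (F (s *: y + (1 - s) *: x)).1 - (F x).1.
  set be' := (F (s *: y + (1 - s) *: x)).2 - (F x).2.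
  have ca : al + al' <= 0 by rewrite /al /al'; lra.
  have cb : be + be' <= 0 by rewrite /be /be'; lra.
  have L1 : s * B.1 <= s * A.1 + 2 * (s * K * eps) /\ s * B.2 <= s * A.2 + 2 * (s * K * eps).
    move: b1 b2 b3 b4 a1 a2 a3 a4.
    case: (mm_cases al be) => [[-> [-> o1]]|[-> [-> o1]]];
    case: (mm_cases al' be') => [[-> [-> o2]]|[-> [-> o2]]]; move=> *; split; lra.
  have E1 : s * A.1 + 2 * (s * K * eps) = s * (A.1 + 2 * K * eps) by ring.
  have E2 : s * A.2 + 2 * (s * K * eps) = s * (A.2 + 2 * K * eps) by ring.
  by rewrite E1 E2 !ler_pM2l in L1.
split; apply/ler_addgt0Pr => e e0.
- have e' : 0 < e / (2 * K + 1) by rewrite divr_gt0 //; lra.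
  apply: le_trans (key _ e').1 _; rewrite lerD2l mulrA ler_pdivrMr; nra.
- have e' : 0 < e / (2 * K + 1) by rewrite divr_gt0 //; lra.
  apply: le_trans (key _ e').2 _; rewrite lerD2l mulrA ler_pdivrMr; nra.
Qed.
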